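(* Under the standing assumptions, $\rho+\mathcal V=j_k\mathsf n^k$; equivalently $e_k(B)-e_k(\tilde D)=\mathsf n^{\mathsf T}\gamma\,W\,\mathsf n$. Moreover $U\mathsf n=\tilde U\tilde{\mathsf n}$ and $\mathsf n^{\mathsf T}\gamma W\mathsf n=\lambda^2\,\tilde{\mathsf n}^{\mathsf T}\varphi\tilde U\tilde{\mathsf n}$.
   Context: Let $s\ge1$. For a square matrix $X$, $e_k(X)$ are the elementary symmetric polynomials defined by $\det(I+tX)=\sum_k e_k(X)t^k$ ($e_k=0$ for $k<0$); $Y_k(X):=\sum_{i=0}^{k}(-1)^{k+i}e_i(X)X^{k-i}$ for $k\ge0$ and $Y_{-1}(X):=0$. Standing assumptions: $e,m$ are invertible real $s\times s$ matrices, $v\in\mathbb R^s$ with $v^{\mathsf T}v<1$, $\lambda:=(1-v^{\mathsf T}v)^{-1/2}$, $\hat\Lambda:=(I-vv^{\mathsf T})^{-1/2}$, and $e^{\mathsf T}\hat\Lambda m$ is symmetric. Define $\gamma=e^{\mathsf T}e$, $\varphi=m^{\mathsf T}m$, $\mathsf n=e^{-1}v$, $\tilde{\mathsf n}=m^{-1}v$, $\tilde D=e^{-1}\hat\Lambda^{-1}m$, $B=e^{-1}\hat\Lambda m$. Fix an integer $k$ and set $U=\lambda^{-1}Y_{k-1}(B)$, $\tilde U=\tilde D\,Y_{k-1}(\tilde D)$, $W=B\,Y_{k-1}(\tilde D)$, $\mathcal V=e_k(\tilde D)$, $\rho=-e_k(B)$, $j=-\gamma W\mathsf n$. *)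

(* Defs.v *)
From HB Require Import structures.
From mathcomp Require Import all_boot all_order all_algebra.
Set Implicit Arguments. Unset Strict Implicit. Unset Printing Implicit Defensive.
Import Order.TTheory GRing.Theory Num.Theory.
Local Open Scope ring_scope.

Section Defs.
Variables (R : comNzRingType) (s : nat).

Definition detIt (X : 'M[R]_s) : {poly R} :=
  \det (1%:M + map_mx (fun x => 'X * x%:P) X).

(* elementary symmetric polynomial e_k(X), defined by det(I+tX)=sum_k e_k(X) t^k *)
Definition esymmx (k : nat) (X : 'M[R]_s) : R := (detIt X)`_k.

Definition Ymx (k : nat) (X : 'M[R]_s) : 'M[R]_s :=
  \sum_(0 <= i < k.+1) ((-1) ^+ (k + i) * esymmx i X) *: X ^+ (k - i).

Definition Ypred (k : nat) (X : 'M[R]_s) : 'M[R]_s :=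
  if k is k'.+1 then Ymx k' X else 0.
End Defs.

Definition sc (R : Type) (A : 'M[R]_1) : R := A 0 0.

(* L is the (principal) inverse square root of A: L symmetric positive
   definite and L^2 A = I, i.e. L = A^{-1/2}. *)
Definition is_inv_sqrt (R : numFieldType) (s : nat) (L A : 'M[R]_s) : Prop :=
  L^T = L /\ (forall x : 'cV[R]_s, x != 0 -> 0 < sc (x^T *m L *m x))
  /\ L *m L *m A = 1%:M.

(* Main.v *)
Require Import Defs.
From HB Require Import structures.
From mathcomp Require Import all_boot all_order all_algebra.
Set Implicit Arguments. Unset Strict Implicit. Unset Printing Implicit Defensive.
Import Order.TTheory GRing.Theory Num.Theory.
Local Open Scope ring_scope.

Lemma det_rank1 (P : idomainType) (s : nat) (M : 'M[P]_s) (a b : 'cV[P]_s) :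
  \det M != 0 ->
  \det (M + a *m b^T) = \det M + (b^T *m \adj M *m a) 0 0.
Proof.
move=> nz.
pose N := block_mx M a (- b^T) (1%:M : 'M_1).
have h1 : block_mx 1%:M (- a) 0 (1%:M : 'M_1) *m N =
          block_mx (M + a *m b^T) 0 (- b^T) 1%:M.
  rewrite /N mulmx_block !mul1mx !mul0mx !add0r !mulNmx mulmxN opprK mulmx1.
  by rewrite addrN addrC.
have h2 : block_mx 1%:M 0 (b^T *m \adj M) ((\det M)%:M : 'M_1) *m N =
          block_mx M a 0 ((b^T *m \adj M *m a) + (\det M)%:M).
  rewrite /N mulmx_block !mul1mx !mul0mx !addr0 mulmx1 -mulmxA mul_adj_mx.
  by rewrite mul_scalar_mx mul_mx_scalar scalerN addrN.
have dN : \det N = \det (M + a *m b^T).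
  have := congr1 determinant h1.
  by rewrite det_mulmx det_ublock det_lblock !det1 !mul1r mulr1.
have := congr1 determinant h2.
rewrite det_mulmx det_lblock det_ublock det1 mul1r det_scalar1 det_mx11 dN.
move=> /(mulfI nz) ->; rewrite !mxE eqxx mulr1n addrC.
done.
Qed.

Section Y.
Variables (R : comNzRingType) (s : nat).
Implicit Types (X : 'M[R]_s).

Lemma Ymx0 X : Ymx 0 X = (esymmx 0 X)%:M.
Proof.
by rewrite /Ymx big_nat1 !expr0 mul1r scalemx1.
Qed.

Lemma YmxS k X : Ymx k.+1 X = (esymmx k.+1 X)%:M - X *m Ymx k X.
Proof.
rewrite /Ymx big_nat_recr //= subnn expr0 exprD -exprMn mulrNN mulr1 expr1n mul1r.
rewrite scalemx1 addrC mulmx_sumr -sumrN; congr (_ + _).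
apply: eq_big_nat => i /andP[_ hi].
rewrite subSn // exprS addSn exprS mulN1r mulNr scaleNr.
by rewrite scalemxAr mulmxE.
Qed.

Definition MP X : 'M[{poly R}]_s := 1%:M + map_mx (fun x => 'X * x%:P) X.
Definition cmx k (A : 'M[{poly R}]_s) : 'M[R]_s := map_mx (fun p : {poly R} => p`_k) A.

Lemma coef_MA k X (A : 'M[{poly R}]_s) : cmx k (MP X *m A) =
  cmx k A + (if k is k'.+1 then X *m cmx k' A else 0).
Proof.
rewrite /MP mulmxDl mul1mx; apply/matrixP => i j.
rewrite /cmx !mxE coefD coef_sum; congr (_ + _).
case: k => [|k].
  rewrite mxE; apply: big1 => l _; rewrite mxE -mulrA coefXM //.
rewrite !mxE; apply: eq_bigr => l _; rewrite !mxE -mulrA coefXM /= coefCM //.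
Qed.

Lemma adj_coef k X : cmx k (\adj (MP X)) = Ymx k X.
Proof.
have key : forall k, cmx k (MP X *m \adj (MP X)) = (esymmx k X)%:M.
  move=> k'; rewrite mul_mx_adj; apply/matrixP => i j.
  by rewrite /cmx !mxE coefMn.
elim: k => [|k IH].
  by have := key 0%N; rewrite coef_MA addr0 Ymx0.
have := key k.+1; rewrite coef_MA IH YmxS => <-.
by rewrite addrK.
Qed.
End Y.

Section Z.
Variables (R : idomainType) (s : nat).
Implicit Types (X : 'M[R]_s).

Lemma detMP_0 X : (\det (MP X))`_0 = 1.
Proof.
have := det_map_mx (horner_eval (0:R)) (MP X).
have -> : ((MP X) ^ horner_eval (0:R))%sesqui = 1%:M.
  apply/matrixP => i j; rewrite /MP !mxE rmorphD rmorphMn rmorph1 rmorphM /=.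
  by rewrite /horner_eval /= hornerX mul0r addr0.
rewrite -horner_coef0 => h; rewrite -[_.[0]]/(horner_eval 0 _) -h.
exact: det1.
Qed.

Lemma detMP_neq0 X : \det (MP X) != 0.
Proof. by apply/eqP => h; have := detMP_0 X; rewrite h coef0 => /eqP; rewrite eq_sym oner_eq0. Qed.

Lemma coef_bAc k (A : 'M[{poly R}]_s) (u w : 'cV[R]_s) :
  (((map_mx polyC w)^T *m A *m map_mx polyC u) 0 0)`_k = (w^T *m cmx k A *m u) 0 0.
Proof.
rewrite !mxE coef_sum; apply: eq_bigr => j _; rewrite !mxE coefMC coef_sum; congr (_ * _).
by apply: eq_bigr => i _; rewrite !mxE coefCM.
Qed.

Lemma MP_rank1 X (u w : 'cV[R]_s) :
  MP (X + u *m w^T) = MP X + ('X *: map_mx polyC u) *m (map_mx polyC w)^T.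
Proof.
apply/matrixP => i j; rewrite /MP !mxE big_ord1 !mxE.
by rewrite big_ord1 !mxE polyCD polyCM mulrDr !addrA mulrA.
Qed.

Lemma esym_rank1 k X (u w : 'cV[R]_s) :
  esymmx k (X + u *m w^T) = esymmx k X + (w^T *m Ypred k X *m u) 0 0.
Proof.
rewrite /esymmx (_ : forall Y, detIt Y = \det (MP Y)) // MP_rank1 det_rank1 ?detMP_neq0 // coefD.
congr (_ + _); rewrite -scalemxAr mxE coefXM.
case: k => [|k] /=; first by rewrite mulmx0 mul0mx mxE.
by rewrite coef_bAc adj_coef.
Qed.

Lemma Y_rank1 k X (u w : 'cV[R]_s) :
  Ymx k (X + u *m w^T) *m u = Ymx k X *m u.
Proof.
elim: k => [|k IH].
  by rewrite !Ymx0 (esym_rank1 0) /= mulmx0 mul0mx mxE addr0.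
rewrite !YmxS !mulmxBl -[(X + _) *m _ *m u]mulmxA IH (esym_rank1 k.+1) /=.
rewrite mulmxDl -[u *m w^T *m _]mulmxA [w^T *m (_ *m u)]mulmxA.
rewrite [w^T *m _ *m u]mx11_scalar mul_mx_scalar raddfD mulmxDl !mul_scalar_mx.
by rewrite -mulmxA opprD addrACA mxE eqxx mulr1n subrr addr0 mulmxA.
Qed.
End Z.

Lemma Ymx_comm (R : comNzRingType) s k (X : 'M[R]_s) : X *m Ymx k X = Ymx k X *m X.
Proof.
elim: k => [|k IH]; first by rewrite Ymx0 mul_mx_scalar mul_scalar_mx.
by rewrite YmxS mulmxBr mulmxBl mul_mx_scalar mul_scalar_mx -mulmxA IH mulmxA.
Qed.

Lemma Ypred_comm (R : comNzRingType) s k (X : 'M[R]_s) : X *m Ypred k X = Ypred k X *m X.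
Proof. by case: k => [|k] /=; [rewrite mulmx0 mul0mx | exact: Ymx_comm]. Qed.

Lemma Ypred_rank1 (R : idomainType) s k (X : 'M[R]_s) (u w : 'cV[R]_s) :
  Ypred k (X + u *m w^T) *m u = Ypred k X *m u.
Proof. by case: k => [|k] /=; [rewrite !mul0mx | exact: Y_rank1]. Qed.

Lemma esym_rank1' (R : idomainType) s k (X : 'M[R]_s) (u w : 'cV[R]_s) :
  esymmx k (X + u *m w^T) = esymmx k X + sc (w^T *m Ypred k X *m u).
Proof. exact: esym_rank1. Qed.

Lemma sc_tr (R : Type) (A : 'M[R]_1) : sc A^T = sc A.
Proof. by rewrite /sc mxE. Qed.

Lemma sc_scale (R : comNzRingType) (a : R) (A : 'M[R]_1) : sc (a *: A) = a * sc A.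
Proof. by rewrite /sc mxE. Qed.

Lemma pd_eig (R : rcfType) s (L : 'M[R]_s) (v : 'cV_s) (mu : R) : 0 < mu ->
  (forall x : 'cV[R]_s, x != 0 -> 0 < sc (x^T *m L *m x)) ->
  mu ^+ 2 *: (L *m (L *m v)) = v -> L *m v = mu^-1 *: v.
Proof.
move=> mu0 pd h.
set z := mu *: (L *m v) - v.
have hz : mu *: (L *m z) = - z.
  by rewrite /z mulmxBr -scalemxAr scalerBr scalerA -expr2 h opprB.
have z0 : z = 0.
  apply/eqP; apply: contraT => nz.
  have p1 := pd z nz.
  have p2 : 0 <= sc (z^T *m z).
    rewrite /sc mxE; apply: sumr_ge0 => i _; rewrite mxE -expr2; exact: sqr_ge0.
  have e : sc (z^T *m L *m z) * mu = - sc (z^T *m z).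
    rewrite mulrC -sc_scale scalemxAr -mulmxA -scalemxAr hz mulmxN /sc mxE //.
  have : 0 < sc (z^T *m L *m z) * mu by exact: mulr_gt0.
  by rewrite e oppr_gt0 ltNge p2.
have : mu *: (L *m v) = v by apply/eqP; rewrite -subr_eq0 -/z z0.
move=> e; rewrite -{2}e scalerA mulVf ?scale1r //; exact: lt0r_neq0.
Qed.

Lemma tr_scale (R : comNzRingType) p q (a : R) (A : 'M[R]_(p, q)) : (a *: A)^T = a *: A^T.
Proof. by apply/matrixP => i j; rewrite !mxE. Qed.

Lemma tr_opp (R : comNzRingType) p q (A : 'M[R]_(p, q)) : (- A)^T = - A^T.
Proof. by apply/matrixP => i j; rewrite !mxE. Qed.

Lemma sc_opp (R : comNzRingType) (A : 'M[R]_1) : sc (- A) = - sc A.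
Proof. by rewrite /sc mxE. Qed.

Unset Implicit Arguments.
Set Strict Implicit.

Theorem mainTheorem3 (R : rcfType) (s : nat) (hs : (0 < s)%N)
  (e m : 'M[R]_s) (v : 'cV[R]_s) (Lhat : 'M[R]_s) (k : nat) :
  e \in unitmx -> m \in unitmx ->
  sc (v^T *m v) < 1 ->
  is_inv_sqrt Lhat (1%:M - v *m v^T) ->
  (e^T *m Lhat *m m)^T = e^T *m Lhat *m m ->
  let lambda := (Num.sqrt (1 - sc (v^T *m v)))^-1 in
  let gamma := e^T *m e in
  let phi := m^T *m m in
  let n := invmx e *m v in
  let nt := invmx m *m v in
  let Dt := invmx e *m invmx Lhat *m m in
  let B := invmx e *m Lhat *m m in
  let U := lambda^-1 *: Ypred k B in
  let Ut := Dt *m Ypred k Dt in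
  let W := B *m Ypred k Dt in
  let Vc := esymmx k Dt in
  let rho := - esymmx k B in
  let j := - (gamma *m W *m n) in
  [/\ rho + Vc = sc (j^T *m n),
      esymmx k B - esymmx k Dt = sc (n^T *m gamma *m W *m n),
      U *m n = Ut *m nt
    & sc (n^T *m gamma *m W *m n) = lambda ^+ 2 * sc (nt^T *m phi *m Ut *m nt)].
Proof.
move=> eU mU hv [LT [Lpd LLA]] _ lambda gamma phi n nt Dt B U Ut W Vc rho j.
pose c := sc (v^T *m v).
pose mu := Num.sqrt (1 - c).
have lamE : lambda = mu^-1 by [].
have mu0 : 0 < mu by rewrite sqrtr_gt0 subr_gt0.
have mu2 : mu ^+ 2 = 1 - c by rewrite sqr_sqrtr // subr_ge0 ltW.
have lam0 : lambda != 0 by rewrite lamE invr_eq0 lt0r_neq0.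
have Av : (1%:M - v *m v^T) *m v = (1 - c) *: v.
  by rewrite mulmxBl mul1mx -mulmxA [v^T *m v]mx11_scalar mul_mx_scalar scalerBl scale1r.
have LLv : mu ^+ 2 *: (Lhat *m (Lhat *m v)) = v.
  by rewrite mu2 !scalemxAr -Av !mulmxA LLA mul1mx.
have Lv : Lhat *m v = lambda *: v by exact: pd_eig.
have LU : Lhat \in unitmx by case: (mulmx1_unit (etrans (mulmxA _ _ _) LLA)).
have iL : invmx Lhat = Lhat *m (1%:M - v *m v^T).
  by rewrite -[invmx Lhat]mulmx1 -{1}LLA !mulmxA mulVmx // mul1mx.
have iLv : invmx Lhat *m v = lambda^-1 *: v.
  rewrite iL -mulmxA Av -scalemxAr Lv scalerA lamE invrK -mu2.
  by rewrite expr2 -mulrA mulfV ?mulr1 // lt0r_neq0.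
pose w := lambda *: (m^T *m v).
have LA : Lhat *m (1%:M - v *m v^T) = Lhat - lambda *: (v *m v^T).
  by rewrite mulmxBr mulmx1 mulmxA Lv scalemxAl.
have hD : Dt = B - n *m w^T.
  rewrite /Dt /B iL LA mulmxBr mulmxBl /n /w tr_scale trmx_mul trmxK.
  by rewrite -!scalemxAr -!scalemxAl !mulmxA.
have hB : B = Dt + n *m w^T by rewrite hD subrK.
have nTg : n^T *m gamma = v^T *m e.
  rewrite /n /gamma trmx_mul trmx_inv mulmxA -[v^T *m _ *m _]mulmxA.
  by rewrite mulVmx ?unitmx_tr // mulmx1.
have vL : v^T *m Lhat = lambda *: v^T by rewrite -{1}LT -trmx_mul Lv tr_scale.
have nTgB : n^T *m gamma *m B = w^T.
  rewrite nTg /B /w tr_scale trmx_mul trmxK !mulmxA -[v^T *m e *m invmx e]mulmxA.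
  by rewrite mulmxV // mulmx1 vL -scalemxAl.
pose Y := Ypred k Dt.
have hesym : esymmx k B = Vc + sc (w^T *m Y *m n) by rewrite hB esym_rank1'.
have hsc : sc (n^T *m gamma *m W *m n) = sc (w^T *m Y *m n).
  by rewrite /W [_ *m (B *m _)]mulmxA nTgB.
have Dnt : Dt *m nt = lambda^-1 *: n.
  by rewrite /Dt /nt mulmxA mulmxK // -mulmxA iLv -scalemxAr.
have Utnt : Ut *m nt = lambda^-1 *: (Y *m n).
  by rewrite /Ut Ypred_comm -mulmxA Dnt -scalemxAr.
have ntTphi : nt^T *m phi = v^T *m m.
  rewrite /nt /phi trmx_mul trmx_inv mulmxA -[v^T *m _ *m _]mulmxA.
  by rewrite mulVmx ?unitmx_tr // mulmx1.
split.
- have tj : sc ((gamma *m W *m n)^T *m n) = sc (n^T *m gamma *m W *m n).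
    by rewrite -sc_tr trmx_mul trmxK !mulmxA.
  rewrite /rho hesym /j tr_opp mulNmx sc_opp tj hsc.
  by rewrite opprD addrAC addNr add0r.
- by rewrite hsc hesym /Vc addrAC subrr add0r.
- transitivity (lambda^-1 *: (Y *m n)); last exact: (esym Utnt).
  by rewrite /U -scalemxAl hB Ypred_rank1.
- have h4 : sc (nt^T *m phi *m Ut *m nt) = lambda^-1 * sc (v^T *m m *m Y *m n).
    by rewrite -mulmxA Utnt ntTphi -scalemxAr sc_scale !mulmxA.
  transitivity (lambda ^+ 2 * (lambda^-1 * sc (v^T *m m *m Y *m n))); last first.
    by congr (_ * _); exact: (esym h4).
  apply: (etrans hsc).
  rewrite /w tr_scale trmx_mul trmxK -!scalemxAl sc_scale.
  by rewrite mulrA expr2 mulfK.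
Qed.
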